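(* Let $a,b$ be coprime positive integers with $ab\ne1$, let $X>0$ and let $u\ne1$ be positive. Then $$\operatorname{vol}(\mathcal{R}'(X))=\operatorname{vol}(\mathcal{R}(X))=\frac{X\operatorname{vol}(\mathcal{S}_{b/a})}{\sqrt{|a^2-b^2|}}.$$ Furthermore $$\mathcal{R}(X)\subseteq[-c\sqrt{X},c\sqrt{X}]\times\big(0,c\sqrt{X/|a^2-b^2|}\big],\qquad \mathcal{S}_u\subseteq[-c,c]\times(0,c],$$ for an absolute constant $c>0$.
   Context: For positive $u\ne1$ define the quadratic forms $p_u(s,t)=-2s^2-\frac{1-u^2}{|1-u^2|}t^2+\frac{4}{\sqrt{|1-u^2|}}st$, $q_u(s,t)=2s^2-\frac{1-u^2}{|1-u^2|}t^2$, $r_u(s,t)=2s^2-2\frac{1-u^2}{\sqrt{|1-u^2|}}st+\frac{1-u^2}{|1-u^2|}t^2$, and $\mathcal{S}_u=\{(s,t)\in\mathbb{R}\times\mathbb{R}_{>0}: 0<p_u(s,t)\le1,\ 0<q_u(s,t)\le1,\ r_u(s,t)>0\}$. With $Q_1(s,t)=2s^2+(a^2-b^2)t^2-4ast$, $Q_2(s,t)=-2s^2+(a^2-b^2)t^2$, $Q_3(s,t)=-2as^2+2(a^2-b^2)st-a(a^2-b^2)t^2$, define $\mathcal{R}(X)=\{(s,t)\in\mathbb{R}\times\mathbb{R}_{>0}: Q_3(s,t)<0,\ 0>Q_1(s,t)\ge -X,\ 0>Q_2(s,t)\ge -X\}$ and $\mathcal{R}'(X)=\{(s,t)\in\mathcal{R}(X):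 s(s-at)\ne0,\ s/t\ne(a^2-b^2)/(2a)\}$. *)

(* Defs.v *)
From HB Require Import structures.
From mathcomp Require Import all_boot all_order all_algebra.
From mathcomp Require Import all_classical all_reals all_analysis.
Set Implicit Arguments. Unset Strict Implicit. Unset Printing Implicit Defensive.
Import Order.TTheory GRing.Theory Num.Theory.
Local Open Scope classical_set_scope.
Local Open Scope ring_scope.

Definition vol2 {R : realType} (A : set (R * R)) : \bar R :=
  ((@lebesgue_measure R) \x (@lebesgue_measure R))%E A.

Section forms.
Variable R : realType.

Definition sgu (u : R) : R := (1 - u ^+ 2) / `|1 - u ^+ 2|.

Definition p_u (u s t : R) : R :=
  - 2 * s ^+ 2 - sgu u * t ^+ 2 + 4 / Num.sqrt `|1 - u ^+ 2| * s * t.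
Definition q_u (u s t : R) : R := 2 * s ^+ 2 - sgu u * t ^+ 2.
Definition r_u (u s t : R) : R :=
  2 * s ^+ 2 - 2 * ((1 - u ^+ 2) / Num.sqrt `|1 - u ^+ 2|) * s * t
  + sgu u * t ^+ 2.

Definition S_u (u : R) : set (R * R) :=
  [set st | 0 < st.2 /\ (0 < p_u u st.1 st.2 <= 1) /\
            (0 < q_u u st.1 st.2 <= 1) /\ 0 < r_u u st.1 st.2].

Definition Q1 (a b s t : R) : R := 2 * s ^+ 2 + (a ^+ 2 - b ^+ 2) * t ^+ 2 - 4 * a * s * t.
Definition Q2 (a b s t : R) : R := - 2 * s ^+ 2 + (a ^+ 2 - b ^+ 2) * t ^+ 2.
Definition Q3 (a b s t : R) : R :=
  - 2 * a * s ^+ 2 + 2 * (a ^+ 2 - b ^+ 2) * s * t - a * (a ^+ 2 - b ^+ 2) * t ^+ 2.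

Definition Rset (a b X : R) : set (R * R) :=
  [set st | 0 < st.2 /\ Q3 a b st.1 st.2 < 0 /\
            (- X <= Q1 a b st.1 st.2 < 0) /\ (- X <= Q2 a b st.1 st.2 < 0)].

Definition Rset' (a b X : R) : set (R * R) :=
  [set st | Rset a b X st /\ st.1 * (st.1 - a * st.2) != 0 /\
            st.1 / st.2 != (a ^+ 2 - b ^+ 2) / (2 * a)].
End forms.

(* Main.v *)
Require Import Defs.
From HB Require Import structures.
From mathcomp Require Import all_boot all_order all_algebra.
From mathcomp Require Import all_classical all_reals all_analysis.
From mathcomp Require Import ring lra measurable_realfun.
Import Order.TTheory GRing.Theory Num.Theory.
Local Open Scope classical_set_scope.
Local Open Scope ring_scope.

Section Helpers.
Variable R : realType.
Notation T := (measurableTypeR R * measurableTypeR R)%type.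
Lemma key (A B sD : R) : 0 < A -> 0 < sD -> sD ^+ 2 = `|A ^+ 2 - B ^+ 2| ->
  sgu (B / A) = (A ^+ 2 - B ^+ 2) / sD ^+ 2 /\
  Num.sqrt `|1 - (B / A) ^+ 2| = sD / A /\
  1 - (B / A) ^+ 2 = (A ^+ 2 - B ^+ 2) / A ^+ 2.
Proof.
move=> A0 sD0 hD.
have e1 : 1 - (B / A) ^+ 2 = (A ^+ 2 - B ^+ 2) / A ^+ 2.
  by field; rewrite gt_eqF.
have e2 : `|1 - (B / A) ^+ 2| = sD ^+ 2 / A ^+ 2.
  rewrite e1 normrM hD normfV (ger0_norm (sqr_ge0 A)) //.
split; last split => //.
  by rewrite /sgu e2 e1; field; rewrite ?gt_eqF.
rewrite e2 -expr_div_n sqrtr_sqr ger0_norm // divr_ge0 // ltW //.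
Qed.

Lemma posdiv (q c : R) : 0 < c -> (0 < - q / c) = (q < 0).
Proof. by move=> c0; rewrite pmulr_lgt0 ?invr_gt0 // oppr_gt0. Qed.

Lemma posdiv1 (q c : R) : 0 < c -> (0 < - q / c <= 1) = (- c <= q < 0).
Proof.
move=> c0; rewrite posdiv // ler_pdivrMr // mul1r lerNl andbC //.
Qed.

Lemma trans (A B al sD s t : R) : 0 < A -> 0 < sD -> 0 < al ->
  sD ^+ 2 = `|A ^+ 2 - B ^+ 2| ->
  Rset A B (al ^+ 2) (s, t) <-> S_u (B / A) (s / al, t * sD / al).
Proof.
move=> A0 sD0 al0 hD.
have [e1 [e2 e3]] := @key A B sD A0 sD0 hD.
have eP : p_u (B / A) (s / al) (t * sD / al) = - Q1 A B s t / al ^+ 2.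
  rewrite /p_u /Q1 e1 e2; field; rewrite ?gt_eqF //.
have eQ : q_u (B / A) (s / al) (t * sD / al) = - Q2 A B s t / al ^+ 2.
  rewrite /q_u /Q2 e1; field; rewrite ?gt_eqF //.
have eR : r_u (B / A) (s / al) (t * sD / al) = - Q3 A B s t / (A * al ^+ 2).
  rewrite /r_u /Q3 e1 e2 e3; field; rewrite ?gt_eqF //.
rewrite /Rset /S_u /=.
have -> : (0 < t * sD / al) = (0 < t).
  by rewrite pmulr_lgt0 ?invr_gt0 // pmulr_lgt0.
rewrite eP eQ eR !posdiv1 ?exprn_gt0 // posdiv ?mulr_gt0 ?exprn_gt0 //.
tauto.
Qed.
Lemma Sbound (u s t : R) : 0 < u -> u != 1 -> S_u u (s, t) ->
  - 2 <= s <= 2 /\ 0 < t <= 2.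
Proof.
move=> u0 u1; rewrite /S_u /p_u /q_u /r_u /= /sgu.
have [h|h|h] := ltrgtP 0 (1 - u ^+ 2).
- rewrite (gtr0_norm h) divff ?gt_eqF // !mul1r.
  set w := Num.sqrt (1 - u ^+ 2).
  have w0 : 0 < w by rewrite sqrtr_gt0.
  have w2 : w ^+ 2 = 1 - u ^+ 2 by rewrite sqr_sqrtr // ltW.
  have w1 : w <= 1.
    have : w ^+ 2 <= 1 by rewrite w2; nra.
    nra.
  set K := 4 / w.
  have Kw : K * w = 4 by rewrite /K mulfVK ?gt_eqF.
  have K4 : 4 <= K by nra.
  move=> [t0 [/andP [p0 p1] [/andP [q0 q1] _]]].
  have st0 : 0 < s * t by nra.
  have s0 : 0 < s by nra.
  have h1 : 2 * s * t <= 1 + t ^+ 2 by nra.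
  have h2 : 4 * s ^+ 2 * t ^+ 2 <= (1 + t ^+ 2) ^+ 2.
    have : (2 * s * t) ^+ 2 <= (1 + t ^+ 2) ^+ 2 by rewrite ler_sqr ?nnegrE; nra.
    nra.
  have h3 : t ^+ 2 < 4 by nra.
  have t2 : t <= 2 by nra.
  have s2 : s ^+ 2 <= 4 by nra.
  split; first by apply/andP; split; nra.
  by rewrite t0 t2.
- rewrite (ltr0_norm h) divrN divff ?lt_eqF //.
  move=> [t0 [_ [/andP [q0 q1] _]]].
  have tb : t ^+ 2 <= 1 by nra.
  have sb : s ^+ 2 <= 1 by nra.
  split; first by apply/andP; split; nra.
  by rewrite t0 /=; nra.
- have e : (u - 1) * (u + 1) = - (1 - u ^+ 2) by ring.
  move: e; rewrite -h oppr0 => /eqP; rewrite mulf_eq0 subr_eq0 (negbTE u1) /= => /eqP hu.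
  have : u + 1 > 0 by nra.
  by rewrite hu ltxx.
Qed.
Lemma mdiv (k : R) : measurable_fun [set: measurableTypeR R]
  ((fun x : R => x / k) : measurableTypeR R -> measurableTypeR R).
Proof. exact: continuous_measurable_fun (@mulrr_continuous R k^-1). Qed.

Lemma leb_scale (k : R) (A : set (measurableTypeR R)) : 0 < k -> measurable A ->
  lebesgue_measure ((fun x : R => x / k) @^-1` A) = (k%:E * lebesgue_measure A)%E.
Proof.
move=> k0 mA.
pose mu := measure_function_pushforward__canonical__measure_function_Measure
  (@lebesgue_measure R) (mdiv k).
have ki : 0 <= k^-1 by rewrite invr_ge0 ltW.
have h1 : forall X : set R, ocitv X ->
    lebesgue_measure X = mscale (NngNum ki) mu X.
  move=> X [[a b] _ <-] /=; rewrite /mscale /=.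
  have -> : mu `]a, b]%classic = lebesgue_measure `](a * k), (b * k)]%classic.
    change (lebesgue_measure ((fun x : R => x / k) @^-1` `]a, b]%classic)
      = lebesgue_measure `](a * k), (b * k)]%classic).
    congr lebesgue_measure.
    apply/seteqP; split => x /=; rewrite !in_itv /=.
      by rewrite ltr_pdivlMr // ler_pdivrMr.
    by rewrite ltr_pdivlMr // ler_pdivrMr.
  rewrite !lebesgue_measure_itv /= !lte_fin ltr_pM2r //.
  case: ifP => _; last by rewrite mule0.
  by rewrite -!EFinB -EFinM; congr EFin; field; rewrite gt_eqF.
have := @lebesgue_measure_unique R (mscale (NngNum ki) mu : {measure set (measurableTypeR R) -> \bar R}) h1 A mA.
rewrite /mscale /= => ->.
change (mu A) with (lebesgue_measure ((fun x : R => x / k) @^-1` A)).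
by rewrite muleA -EFinM divff ?gt_eqF // mul1e.
Qed.

Lemma int_scale (a : R) (h : measurableTypeR R -> \bar R) : 0 < a ->
  measurable_fun setT h -> (forall x, (0 <= h x)%E) ->
  (\int[lebesgue_measure]_x h (x / a)%R = a%:E * \int[lebesgue_measure]_x h x)%E.
Proof.
move=> a0 mh h0.
have := @ge0_integral_pushforward _ _ _ _ R _ (mdiv a) lebesgue_measure setT h
  measurableT mh (fun y _ => h0 y).
rewrite preimage_setT => <-.
have ai : 0 <= a by rewrite ltW.
rewrite (eq_measure_integral (mscale (NngNum ai) lebesgue_measure)); last first.
  by move=> ? A mA _; exact: (leb_scale a A a0 mA).
  exact: mdiv.
by rewrite ge0_integral_mscale.
Qed.
Lemma mquad (c1 c2 c3 : R) :
  measurable_fun [set: T] (fun st : T => c1 * st.1 ^+ 2 + c2 * st.2 ^+ 2 + c3 * st.1 * st.2).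
Proof.
have m1 : measurable_fun [set: T] (fun st : T => st.1 : R) by exact: measurable_fst.
have m2 : measurable_fun [set: T] (fun st : T => st.2 : R) by exact: measurable_snd.
apply: measurable_funD; first apply: measurable_funD.
- apply: measurable_funM; first exact: measurable_cst.
  exact: measurable_funX.
- apply: measurable_funM; first exact: measurable_cst.
  exact: measurable_funX.
- apply: measurable_funM => //; apply: measurable_funM => //; exact: measurable_cst.
Qed.

Lemma mpre (f : T -> R) (I : interval R) : measurable_fun [set: T] f ->
  measurable (f @^-1` [set` I]).
Proof.
move=> mf; rewrite -(setTI (_ @^-1` _)); apply: mf => //.
Qed.

Lemma mS (u : R) : measurable (S_u u : set T).
Proof.
have mp := mquad (-2) (- sgu u) (4 / Num.sqrt `|1 - u ^+ 2|).
have mq := mquad 2 (- sgu u) 0.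
have mr := mquad 2 (sgu u) (- 2 * ((1 - u ^+ 2) / Num.sqrt `|1 - u ^+ 2|)).
have m2 : measurable_fun [set: T] (fun st : T => st.2 : R) by exact: measurable_snd.
have -> : (S_u u : set T) =
  ((fun st : T => st.2 : R) @^-1` [set` `]0, +oo[]) `&`
  ((fun st : T => -2 * st.1 ^+ 2 + (- sgu u) * st.2 ^+ 2 + 4 / Num.sqrt `|1 - u ^+ 2| * st.1 * st.2) @^-1` [set` `]0, 1]]) `&`
  ((fun st : T => 2 * st.1 ^+ 2 + (- sgu u) * st.2 ^+ 2 + 0 * st.1 * st.2) @^-1` [set` `]0, 1]]) `&`
  ((fun st : T => 2 * st.1 ^+ 2 + (sgu u) * st.2 ^+ 2 + - 2 * ((1 - u ^+ 2) / Num.sqrt `|1 - u ^+ 2|) * st.1 * st.2) @^-1` [set` `]0, +oo[]).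
  have ep : forall s t, p_u u s t = -2 * s ^+ 2 + (- sgu u) * t ^+ 2 + 4 / Num.sqrt `|1 - u ^+ 2| * s * t.
    by move=> s t; rewrite /p_u; ring.
  have eq : forall s t, q_u u s t = 2 * s ^+ 2 + (- sgu u) * t ^+ 2 + 0 * s * t.
    by move=> s t; rewrite /q_u; ring.
  have er : forall s t, r_u u s t = 2 * s ^+ 2 + (sgu u) * t ^+ 2 + - 2 * ((1 - u ^+ 2) / Num.sqrt `|1 - u ^+ 2|) * s * t.
    by move=> s t; rewrite /r_u; ring.
  apply/seteqP; split => -[s t]; rewrite /S_u /= !in_itv /= !andbT ep eq er; intuition.
by apply: measurableI; [apply: measurableI; [apply: measurableI|]|]; apply: mpre.
Qed.

Lemma vol_main (A B X : R) : 0 < A -> 0 < B -> A != B -> 0 < X ->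
  vol2 (Rset' A B X) = vol2 (Rset A B X) /\
  vol2 (Rset A B X) = ((X / Num.sqrt `|A ^+ 2 - B ^+ 2|)%:E * vol2 (S_u (B / A)))%E.
Proof.
move=> A0 B0 AB X0.
have DN : A ^+ 2 - B ^+ 2 != 0.
  have -> : A ^+ 2 - B ^+ 2 = (A - B) * (A + B) by ring.
  by rewrite mulf_neq0 // ?subr_eq0 // gt_eqF // addr_gt0.
set D := `|A ^+ 2 - B ^+ 2|.
have D0 : 0 < D by rewrite normr_gt0.
set sD := Num.sqrt D.
have sD0 : 0 < sD by rewrite sqrtr_gt0.
have sD2 : sD ^+ 2 = D by rewrite sqr_sqrtr // ltW.
set al := Num.sqrt X.
have al0 : 0 < al by rewrite sqrtr_gt0.
have al2 : al ^+ 2 = X by rewrite sqr_sqrtr // ltW.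
have tr : forall s t, Rset A B X (s, t) <-> S_u (B / A) (s / al, t * sD / al).
  by move=> s t; rewrite -al2; exact: trans.
pose S : set T := S_u (B / A).
have mS' : measurable S := mS (B / A).
pose h := fun x : measurableTypeR R => lebesgue_measure (xsection S x).
have mh : measurable_fun setT h := measurable_fun_xsection lebesgue_measure mS'.
have h0 : forall x, (0 <= h x)%E by move=> x; exact: measure_ge0.
have sec : forall x, xsection (Rset A B X) x =
    (fun y : R => y / (al / sD)) @^-1` xsection S (x / al).
  move=> x; apply/seteqP; split => y; rewrite /xsection /= !inE;
    rewrite (_ : y / (al / sD) = y * sD / al); [exact: (tr x y).1|field; rewrite !gt_eqF //|
      exact: (tr x y).2| field; rewrite !gt_eqF //].
have msec : forall x, measurable (xsection (Rset A B X) x : set (measurableTypeR R)).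
  move=> x; rewrite sec -(setTI (_ @^-1` _)); apply: mdiv => //.
  exact: measurable_xsection.
have secv : forall x, lebesgue_measure (xsection (Rset A B X) x) =
    ((al / sD)%:E * h (x / al)%R)%E.
  move=> x; rewrite sec leb_scale ?divr_gt0 //; exact: measurable_xsection.
split.
  rewrite /vol2 /product_measure1 /=.
  apply: eq_integral => x _ /=.
  have [->|x0] := eqVneq x 0.
    have e : xsection (Rset A B X) 0 = set0.
      apply/seteqP; split => y //=; rewrite /xsection /= inE.
      move=> [t0 [h3 [/andP [_ h1] /andP [_ h2]]]].
      move: h2 h3; rewrite /Q2 /Q3 /=.
      set w := (A ^+ 2 - B ^+ 2) * y ^+ 2.
      have -> : - 2 * 0 ^+ 2 + (A ^+ 2 - B ^+ 2) * y ^+ 2 = w by rewrite /w; ring.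
      have -> : - 2 * A * 0 ^+ 2 + 2 * (A ^+ 2 - B ^+ 2) * 0 * y
          - A * (A ^+ 2 - B ^+ 2) * y ^+ 2 = - (A * w) by rewrite /w; ring.
      move=> hw; rewrite oppr_lt0 => hw2.
      have : A * w < 0 by rewrite pmulr_rlt0.
      by rewrite ltNge (ltW hw2).
    have e' : xsection (Rset' A B X) 0 = set0.
      apply/seteqP; split => y //=; rewrite /xsection /= inE => -[hR _].
      have : (xsection (Rset A B X) 0) y by rewrite /xsection /= inE.
      by rewrite e.
    by rewrite e e'.
  set K := (A ^+ 2 - B ^+ 2) / (2 * A).
  have K0 : K != 0 by rewrite mulf_neq0 // invr_eq0 mulf_neq0 // gt_eqF.
  have yA : forall y, (x * (x - A * y) == 0) = (y == x / A).
    move=> y; rewrite mulf_eq0 (negbTE x0) /= subr_eq0.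
    by apply/eqP/eqP => hy; rewrite hy; field; rewrite gt_eqF.
  have yK : forall y, 0 < y -> (x / y == K) = (y == x / K).
    move=> y y0; apply/eqP/eqP => hy.
      by rewrite -hy; field; rewrite x0 gt_eqF.
    by rewrite hy; field; rewrite x0 K0.
  pose N : set (measurableTypeR R) := [set x / A] `|` [set x / K].
  have eS : xsection (Rset' A B X) x = xsection (Rset A B X) x `\` N.
    apply/seteqP; split => y; rewrite /xsection /= !inE.
      move=> [hR [h1 h2]]; split => //.
      have y0 : 0 < y := hR.1.
      move: h1 h2; rewrite yA yK // => h1 h2.
      by case => /= hy; [move: h1 | move: h2]; rewrite hy eqxx.
    move=> [hR hN]; have y0 : 0 < y := hR.1.
    split => //; split; [rewrite yA | rewrite yK //]; apply/eqP => hy; apply: hN;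
      [left|right]; exact: hy.
  have mN : measurable N by apply: measurableU; exact: measurable_set1.
  have N0 : lebesgue_measure N = 0%E.
    apply/eqP; rewrite eq_le measure_ge0 andbT.
    apply: (@le_trans _ _ (lebesgue_measure [set (x / A)%R] + lebesgue_measure [set (x / K)%R])%E).
      by apply: measureU2; exact: measurable_set1.
    by rewrite !lebesgue_measure_set1 adde0.
  rewrite eS.
  have -> : lebesgue_measure (xsection (Rset A B X) x) =
    (lebesgue_measure (xsection (Rset A B X) x `\` N) +
     lebesgue_measure (xsection (Rset A B X) x `&` N))%E.
    exact: measureDI.
  have -> : lebesgue_measure (xsection (Rset A B X) x `&` N) = 0%E.
    apply/eqP; rewrite eq_le measure_ge0 andbT -N0.
    by apply: le_measure; rewrite ?inE //; exact: measurableI.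
  by rewrite adde0.
rewrite /vol2 /product_measure1 /=.
under eq_integral => x _ do rewrite secv.
have mha : measurable_fun setT (fun x : measurableTypeR R => h (x / al)%R).
  exact: measurableT_comp mh (mdiv al).
rewrite ge0_integralZl_EFin //; last by rewrite divr_ge0 // ltW.
rewrite (int_scale al h al0 mh h0) muleA -EFinM.
congr (_ * _)%E; congr EFin.
by rewrite -al2; field; rewrite gt_eqF.
Qed.

Lemma bound_main (A B X : R) : 0 < A -> 0 < B -> A != B -> 0 < X ->
  Rset A B X `<=` [set st | - 2 * Num.sqrt X <= st.1 <= 2 * Num.sqrt X /\
                    0 < st.2 <= 2 * Num.sqrt (X / `|A ^+ 2 - B ^+ 2|)].
Proof.
move=> A0 B0 AB X0.
have DN : A ^+ 2 - B ^+ 2 != 0.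
  have -> : A ^+ 2 - B ^+ 2 = (A - B) * (A + B) by ring.
  by rewrite mulf_neq0 // ?subr_eq0 // gt_eqF // addr_gt0.
set D := `|A ^+ 2 - B ^+ 2|.
have D0 : 0 < D by rewrite normr_gt0.
set sD := Num.sqrt D.
have sD0 : 0 < sD by rewrite sqrtr_gt0.
have sD2 : sD ^+ 2 = D by rewrite sqr_sqrtr // ltW.
set al := Num.sqrt X.
have al0 : 0 < al by rewrite sqrtr_gt0.
have al2 : al ^+ 2 = X by rewrite sqr_sqrtr // ltW.
have be : Num.sqrt (X / D) = al / sD by rewrite sqrtrM ?sqrtrV // ltW.
have u0 : 0 < B / A by rewrite divr_gt0.
have u1 : B / A != 1.
  apply/eqP => h; move: AB; rewrite (_ : B = A) ?eqxx //.
  by rewrite -[B](@divfK _ A) ?h ?mul1r // gt_eqF.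
move=> [s t] hR.
have hR' : Rset A B (al ^+ 2) (s, t) by rewrite al2.
have := @Sbound (B / A) (s / al) (t * sD / al) u0 u1
  ((@trans A B al sD s t A0 sD0 al0 sD2).1 hR').
move=> [/andP [h1 h2] /andP [h3 h4]].
move: h1 h2 h3 h4.
set z := s / al; set w := t * sD / al.
have es : s = z * al by rewrite /z; field; rewrite gt_eqF.
have et : t = w * (al / sD) by rewrite /w; field; rewrite !gt_eqF.
have ab0 : 0 < al / sD by rewrite divr_gt0.
move=> h1 h2 h3 h4; rewrite be /= es et; split; apply/andP; split; nra.
Qed.


Lemma nat_params (a b : nat) : (0 < a)%N -> (0 < b)%N -> coprime a b ->
  (a * b != 1)%N -> a%:R != b%:R :> R.
Proof.
move=> a0 b0 cop ab1; apply/eqP => /eqP; rewrite eqr_nat => /eqP hab.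
move: cop ab1; rewrite hab /coprime gcdnn => /eqP ->.
by [].
Qed.
End Helpers.

Theorem lemma6p2 (R : realType) :
  (forall (a b : nat) (X : R),
     (0 < a)%N -> (0 < b)%N -> coprime a b -> (a * b != 1)%N -> 0 < X ->
     vol2 (Rset' a%:R b%:R X) = vol2 (Rset a%:R b%:R X) /\
     vol2 (Rset a%:R b%:R X) =
       ((X / Num.sqrt `|a%:R ^+ 2 - b%:R ^+ 2|)%:E
        * vol2 (S_u (b%:R / a%:R)))%E)
  /\
  (exists c : R, 0 < c /\
     (forall (a b : nat) (X : R),
        (0 < a)%N -> (0 < b)%N -> coprime a b -> (a * b != 1)%N -> 0 < X ->
        Rset a%:R b%:R X `<=`
          [set st | - c * Num.sqrt X <= st.1 <= c * Num.sqrt X /\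
                    0 < st.2 <= c * Num.sqrt (X / `|a%:R ^+ 2 - b%:R ^+ 2|)]) /\
     (forall u : R, 0 < u -> u != 1 ->
        S_u u `<=` [set st | - c <= st.1 <= c /\ 0 < st.2 <= c])).
Proof.
split.
  move=> a b X a0 b0 cop ab1 X0.
  apply: vol_main => //; [by rewrite ltr0n|by rewrite ltr0n|exact: nat_params].
exists 2; split => //; split.
  move=> a b X a0 b0 cop ab1 X0.
  apply: bound_main => //; [by rewrite ltr0n|by rewrite ltr0n|exact: nat_params].
by move=> u u0 u1 [s t] /(@Sbound R u s t u0 u1).
Qed.
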